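(* Let $d\ge 2$. For every $R \subseteq \{0,1,\dots,d-1\}$, $$\min_{m \in \mathcal{M}_d(R)} \| m - \textsc{max} \|_\infty = \min_{m \in \mathcal{M}^s_d(R)} \| m - \textsc{max} \|_\infty.$$
   Context: For $x\in\mathbb{R}^d$ and nonempty $A\subseteq\{1,\dots,d\}$, $s(x;A)=\max\{x_j:j\in A\}$; $C(k,r,d)$ is the $k$-th $r$-element subset of $\{1,\dots,d\}$ in lexicographic order. $\mathcal{M}_d(R)$ is the set of functions $x\mapsto \beta_0+\sum_{r\in R\setminus\{0\}}\sum_{j=1}^{\binom dr}\beta_r^j s(x;C(j,r,d))$ with real coefficients, the intercept $\beta_0$ present iff $0\in R$. $\mathcal{M}_d^s(R)=\{m\in\mathcal{M}_d(R): m(x_1,\dots,x_d)=m(x_{\sigma_1},\dots,x_{\sigma_d})\text{ for all permutations }\sigma\text{ of }\{1,\dots,d\}\}$. $\textsc{max}(x)=\max_i x_i$ and $\|\cdot\|_\infty$ is the sup norm over $[0,1]^d$. *)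

(* Defs.v *)
From HB Require Import structures.
From mathcomp Require Import all_boot all_order all_algebra all_fingroup.
From mathcomp Require Import all_classical all_reals.
Set Implicit Arguments. Unset Strict Implicit. Unset Printing Implicit Defensive.
Import Order.TTheory GRing.Theory Num.Theory.
Local Open Scope ring_scope.
Local Open Scope classical_set_scope.

Section Defs.
Variables (R : realType) (d : nat).

(* s(x;A) = max { x_j : j in A } for nonempty A (the seed of the fold is
   x_j for some j in A, so the fold is the true maximum; for A empty it is 0,
   which is never used). *)
Definition smax (x : 'I_d -> R) (A : {set 'I_d}) : R :=
  \big[Num.max/oapp x 0 [pick j in A]]_(j in A) x j.

Definition maxf (x : 'I_d -> R) : R := smax x [set: 'I_d].

(* Admissible (nonzero) orders r in R \ {0}; the subsets C(j,r,d),
   j = 1..binom d r, are exactly the r-element subsets of {1..d}. *)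
Definition admissible (Rs : {set 'I_d}) (A : {set 'I_d}) : bool :=
  (0 < #|A|)%N && [exists r in Rs, val r == #|A|].

Definition inM (Rs : {set 'I_d}) (m : ('I_d -> R) -> R) : Prop :=
  exists (b0 : R) (beta : {set 'I_d} -> R),
    forall x, m x = (if [exists r in Rs, val r == 0%N] then b0 else 0)
                    + \sum_(A : {set 'I_d} | admissible Rs A) beta A * smax x A.

Definition inMs (Rs : {set 'I_d}) (m : ('I_d -> R) -> R) : Prop :=
  inM Rs m /\ forall (s : 'S_d) (x : 'I_d -> R), m x = m (fun i => x (s i)).

Definition cube : set ('I_d -> R) := [set x | forall i, 0 <= x i <= 1].

Definition supnorm (f : ('I_d -> R) -> R) : R := sup [set `|f x| | x in cube].

End Defs.

(* Main.v *)
Require Import Defs.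
From HB Require Import structures.
From mathcomp Require Import all_boot all_order all_algebra all_fingroup.
From mathcomp Require Import all_classical all_reals.
From mathcomp Require Import ring lra.
Import Order.TTheory GRing.Theory Num.Theory.
Local Open Scope ring_scope.

Local Notation set0 := (@finset.set0 _).
Section S1.
Variables (R : realType) (d : nat).
Implicit Types (x : 'I_d -> R) (A : {set 'I_d}).

Lemma bigmax_seq_ge (I : eqType) (r : seq I) (P : pred I) (F : I -> R) (idx : R) j :
  j \in r -> P j -> F j <= \big[Num.max/idx]_(i <- r | P i) F i.
Proof.
elim: r => // a r IH; rewrite in_cons big_cons => /orP [/eqP <- Pj|jr Pj].
  by rewrite Pj le_max lexx.
case: ifP => _; last exact: IH.
by rewrite le_max IH ?orbT.
Qed.

Lemma bigmax_seq_idx (I : eqType) (r : seq I) (P : pred I) (F : I -> R) (idx : R) :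
  idx <= \big[Num.max/idx]_(i <- r | P i) F i.
Proof.
elim: r => [|a r IH]; first by rewrite big_nil.
rewrite big_cons; case: ifP => // _; by rewrite le_max IH orbT.
Qed.

Lemma bigmax_seq_mem (I : eqType) (r : seq I) (P : pred I) (F : I -> R) (idx : R) :
  (\big[Num.max/idx]_(i <- r | P i) F i == idx) ||
  has (fun i => P i && (\big[Num.max/idx]_(i <- r | P i) F i == F i)) r.
Proof.
elim: r => [|a r IH]; first by rewrite big_nil eqxx.
have -> : \big[Num.max/idx]_(i <- a :: r | P i) F i =
  if P a then Num.max (F a) (\big[Num.max/idx]_(i <- r | P i) F i)
  else \big[Num.max/idx]_(i <- r | P i) F i by rewrite big_cons.
move: IH; set b := \big[Num.max/idx]_(i <- r | P i) F i => IH /=.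
case: ifP => Pa /=.
  case: (leP (F a) b) => hab.
    idtac.
    case/orP: IH => [->//|/hasP [i ir /andP [Pi /eqP bi]]].
    apply/orP; right; apply/orP; right; apply/hasP; exists i => //.
    by rewrite Pi bi eqxx.
  by rewrite eqxx orbT.
case/orP: IH => [->//|/hasP [i ir /andP [Pi /eqP bi]]].
by apply/orP; right; apply/hasP; exists i => //; rewrite Pi bi eqxx.
Qed.

Lemma smaxP x A : A != set0 ->
  (forall j, j \in A -> x j <= smax x A) /\ exists2 j, j \in A & smax x A = x j.
Proof.
move=> A0; rewrite /smax.
case: pickP => [j0 j0A|]; last first.
  by move=> h; case/set0Pn: A0 => j; rewrite h.
split.
  by move=> j jA; apply: bigmax_seq_ge => //; rewrite mem_index_enum.
case/orP: (@bigmax_seq_mem _ (index_enum 'I_d) (fun j => j \in A) x (x j0)) => [/eqP ->|].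
  by exists j0.
by case/hasP => i _ /andP [iA /eqP ->]; exists i.
Qed.

Lemma smax0 x : smax x set0 = 0.
Proof.
rewrite /smax big_set0; case: pickP => // j; by rewrite inE.
Qed.

Lemma smax_eq x A M : (forall j, j \in A -> x j <= M) -> (exists2 j, j \in A & x j = M) ->
  smax x A = M.
Proof.
move=> ub [j jA eM].
have A0 : A != set0 by apply/set0Pn; exists j.
have [h1 [k kA e]] := @smaxP x A A0.
apply/le_anti/andP; split; first by rewrite e; exact: ub.
by rewrite -eM; exact: h1.
Qed.

Lemma smax_mono x A (phi : R -> R) : {homo phi : a b / a <= b} -> phi 0 = 0 ->
  smax (fun j => phi (x j)) A = phi (smax x A).
Proof.
move=> hom phi0; have [->|A0] := eqVneq A set0; first by rewrite !smax0 phi0.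
have [h1 [k kA e]] := @smaxP x A A0.
apply: smax_eq; last by exists k => //; rewrite e.
by move=> j jA; apply: hom; exact: h1.
Qed.

Lemma smax_perm x A (s : 'S_d) : smax (fun i => x (s i)) A = smax x (s @: A).
Proof.
have [->|A0] := eqVneq A set0; first by rewrite imset0 !smax0.
have [h1 [k kA e]] := @smaxP (fun i => x (s i)) A A0.
symmetry; apply: smax_eq; last by exists (s k); [exact: imset_f|].
by move=> j /imsetP [i iA ->]; exact: h1.
Qed.

Definition vx (S : {set 'I_d}) : 'I_d -> R := fun j => (j \in S)%:R.

Lemma smax_vx S A : smax (vx S) A = ((A :&: S) != set0)%:R.
Proof.
have [->|A0] := eqVneq A set0; first by rewrite finset.set0I eqxx smax0.
have [AS|AS] := eqVneq (A :&: S) set0.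
  case/set0Pn: A0 => k kA.
  apply: smax_eq; last first.
    exists k => //; rewrite /vx; case kS: (k \in S) => //.
    have : k \in A :&: S by rewrite inE kA kS.
    by rewrite AS inE.
  move=> j jA; rewrite /vx; case jS: (j \in S) => //.
  have : j \in A :&: S by rewrite inE jA jS.
  by rewrite AS inE.
case/set0Pn: AS => k; rewrite inE => /andP [kA kS].
apply: smax_eq; last by exists k => //; rewrite /vx kS.
by move=> j _; rewrite /vx; case: (j \in S); rewrite ?ler01.
Qed.

End S1.


Section S2.
Variables (R : realType) (d : nat).

Definition Fr (x : 'I_d -> R) := [set j | (0 < x j) && (x j < 1)].

Lemma cube_reduce (c : R) (g : {set 'I_d} -> R) (E : R) :
  (forall S, `|c + \sum_A g A * smax (vx R d S) A| <= E) ->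
  forall x : 'I_d -> R, (forall i, 0 <= x i <= 1) ->
  `|c + \sum_A g A * smax x A| <= E.
Proof.
move=> hV.
suff H : forall n (x : 'I_d -> R), (forall i, 0 <= x i <= 1) -> (#|Fr x| <= n)%N ->
  `|c + \sum_A g A * smax x A| <= E.
  by move=> x hx; apply: (H _ x hx (leqnn _)).
elim=> [|n IH] x hx hn.
  have -> : x = vx R d [set j | x j == 1].
    apply/funext => j; rewrite /vx inE.
    have : j \notin Fr x.
      by move: hn; rewrite leqn0 cards_eq0 => /eqP ->; rewrite inE.
    rewrite inE negb_and -!leNgt; case/andP: (hx j) => h0 h1.
    case/orP => h.
      have -> : x j = 0 by apply/le_anti; rewrite h h0.
      by rewrite eq_sym oner_eq0.
    have -> : x j = 1 by apply/le_anti; rewrite h h1.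
    by rewrite eqxx.
  exact: hV.
have [F0|F0] := eqVneq (Fr x) set0.
  by apply: (IH x hx); rewrite F0 cards0.
have [hub [js jsF et]] := @smaxP R d x _ F0.
set t := smax x (Fr x) in hub et.
have : js \in Fr x := jsF; rewrite inE => /andP [t0 t1]; rewrite -et in t0 t1.
have dich : forall j, x j <= t \/ x j = 1.
  move=> j; case/andP: (hx j) => h0 h1.
  have [jF|jF] := boolP (j \in Fr x); first by left; exact: hub.
  move: jF; rewrite inE negb_and -!leNgt => /orP [h|h].
    by left; apply: le_trans h (ltW t0).
  by right; apply/le_anti; rewrite h h1.
pose py (u : R) := Num.max ((u - t) / (1 - t)) 0.
pose pz (u : R) := Num.min (u / t) 1.
have t1' : 0 < 1 - t by rewrite subr_gt0.
have pyh : {homo py : a b / a <= b}.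
  move=> a b ab; rewrite /py ge_max !le_max lexx orbT andbT.
  by rewrite ler_pM2r ?invr_gt0 // lerD2r ab.
have pzh : {homo pz : a b / a <= b}.
  move=> a b ab; rewrite /pz le_min !ge_min lexx orbT andbT.
  by rewrite ler_pM2r ?invr_gt0 // ab.
have py0 : py 0 = 0.
  rewrite /py; apply/max_idPr.
  by rewrite pmulr_lle0 ?invr_gt0 // subr_le0 ltW.
have pz0 : pz 0 = 0 by rewrite /pz mul0r; apply/min_idPl; exact: ler01.
pose ps (u : R) := (1 - t) * py u + t * pz u.
have psh : {homo ps : a b / a <= b}.
  move=> a b ab; rewrite /ps lerD // ler_wpM2l ?(ltW t1') ?(ltW t0) //.
  exact: pyh. exact: pzh.
have ps0 : ps 0 = 0 by rewrite /ps py0 pz0 !mulr0 addr0.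
have pyv : forall j, py (x j) = 0 \/ (py (x j) = 1 /\ x j = 1).
  move=> j; case: (dich j) => h; [left|right].
    by rewrite /py; apply/max_idPr; rewrite pmulr_lle0 ?invr_gt0 // subr_le0.
  by rewrite /py h divff ?gt_eqF //; split=> //; apply/max_idPl; exact: ler01.
have pzv : forall j, (pz (x j) = x j / t /\ x j <= t) \/ (pz (x j) = 1 /\ x j = 1).
  move=> j; case: (dich j) => h; [left|right].
    split=> //; rewrite /pz; apply/min_idPl.
    by rewrite ler_pdivrMr // mul1r.
  split=> //; rewrite /pz h mul1r; apply/min_idPr.
  by rewrite invf_ge1 // ltW.
have psx : forall j, ps (x j) = x j.
  move=> j; rewrite /ps; case: (dich j) => h.
    have -> : py (x j) = 0.
      by rewrite /py; apply/max_idPr; rewrite pmulr_lle0 ?invr_gt0 // subr_le0.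
    have -> : pz (x j) = x j / t.
      by rewrite /pz; apply/min_idPl; rewrite ler_pdivrMr // mul1r.
    by rewrite mulr0 add0r mulrC divfK // gt_eqF.
  have -> : py (x j) = 1.
    by rewrite /py h divff ?gt_eqF //; apply/max_idPl; exact: ler01.
  have -> : pz (x j) = 1.
    by rewrite /pz h mul1r; apply/min_idPr; rewrite invf_ge1 // ltW.
  by rewrite h; ring.
pose y := fun j => py (x j).
pose z := fun j => pz (x j).
have key : forall A, smax x A = (1 - t) * smax y A + t * smax z A.
  move=> A.
  have -> : smax x A = smax (fun j => ps (x j)) A.
    by congr smax; apply/funext => j; rewrite psx.
  by rewrite smax_mono // /y /z !smax_mono.
have hy : forall i, 0 <= y i <= 1.
  by move=> i; rewrite /y; case: (pyv i) => [->|[-> _]]; rewrite lexx ler01.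
have hz : forall i, 0 <= z i <= 1.
  move=> i; rewrite /z; case: (pzv i) => [[-> h]|[-> _]]; last by rewrite lexx ler01.
  case/andP: (hx i) => h0 _.
  by rewrite divr_ge0 ?(ltW t0) // ler_pdivrMr // mul1r.
have IHy : `|c + \sum_A g A * smax y A| <= E.
  apply: (IH y hy); suff -> : Fr y = set0 by rewrite cards0.
  apply/setP => j.
  rewrite !inE /y; case: (pyv j) => [->|[-> _]]; by rewrite ltxx ?andbF.
have IHz : `|c + \sum_A g A * smax z A| <= E.
  apply: (IH z hz).
  have sub : Fr z \subset Fr x :\ js.
    apply/fintype.subsetP => j; rewrite !inE /z; case: (pzv j) => [[-> h]|[-> _]]; last by rewrite ltxx andbF.
    case/andP => h0 h1.
    have xj0 : 0 < x j by move: h0; rewrite pmulr_lgt0 // invr_gt0.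
    apply/andP; split; last by rewrite xj0 (le_lt_trans h t1).
    apply/eqP => ej; move: h1; rewrite ej -et divff ?ltxx // gt_eqF //.
  have := subset_leq_card sub; rewrite (cardsD1 js (Fr x)) jsF add1n in hn.
  by move=> h; apply: leq_trans h _; rewrite -ltnS.
have -> : c + \sum_A g A * smax x A =
  (1 - t) * (c + \sum_A g A * smax y A) + t * (c + \sum_A g A * smax z A).
  rewrite !mulrDr !big_distrr /=.
  have -> : \sum_A g A * smax x A =
     \sum_A ((1 - t) * (g A * smax y A) + t * (g A * smax z A)).
    by apply: eq_bigr => A _; rewrite key; ring.
  rewrite big_split /=; ring.
apply: le_trans (ler_normD _ _) _.
rewrite !normrM (ger0_norm (ltW t1')) (ger0_norm (ltW t0)).
have e1 : (1 - t) * `|c + \sum_A g A * smax y A| <= (1 - t) * E by rewrite ler_wpM2l ?(ltW t1').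
have e2 : t * `|c + \sum_A g A * smax z A| <= t * E by rewrite ler_wpM2l ?(ltW t0).
apply: le_trans (lerD e1 e2) _; rewrite -mulrDl subrK mul1r //.
Qed.

End S2.


Section S3.
Variables (R : realType) (d : nat).
Local Notation vx := (vx R d).
Local Notation smax := (@smax R d).
Local Notation maxf := (@maxf R d).
Local Notation setT := (finset.setTfor ('I_d : finType)).

Definition err (m : ('I_d -> R) -> R) : R :=
  \big[Num.max/0]_(S : {set 'I_d}) `|m (vx S) - maxf (vx S)|.

Lemma err_ge (m : ('I_d -> R) -> R) S : `|m (vx S) - maxf (vx S)| <= err m.
Proof. exact: (@bigmax_seq_ge R _ (index_enum _) xpredT _ 0 S (mem_index_enum S) isT). Qed.

Lemma err_ge0 (m : ('I_d -> R) -> R) : 0 <= err m.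
Proof. exact: (@bigmax_seq_idx R _ (index_enum _) xpredT). Qed.

Lemma maxf_vx S : maxf (vx S) = (S != set0)%:R.
Proof. by rewrite /maxf smax_vx finset.setTI. Qed.

Lemma inM_form (Rs : {set 'I_d}) m : inM Rs m ->
  exists c (g : {set 'I_d} -> R), forall x, m x - maxf x = c + \sum_A g A * smax x A.
Proof.
case=> b0 [beta hm].
exists (if [exists r in Rs, val r == 0%N] then b0 else 0).
exists (fun A => (if admissible Rs A then beta A else 0) - (A == setT)%:R).
move=> x; rewrite hm -addrA; congr (_ + _).
have -> : maxf x = \sum_A (A == setT)%:R * smax x A.
  rewrite (bigD1 setT) //= eqxx mul1r big1 ?addr0 // => A /negbTE ->.
  by rewrite mul0r.
rewrite big_mkcond /= -sumrB; apply: eq_bigr => A _.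
by case: ifP => _; rewrite mulrBl ?mul0r.
Qed.

Lemma err_bound Rs m : inM Rs m -> forall x, cube x -> `|m x - maxf x| <= err m.
Proof.
move=> /inM_form [c [g hg]] x hx; rewrite hg.
apply: cube_reduce => [S|i]; last exact: hx.
by rewrite -hg; exact: err_ge.
Qed.

Lemma vx_cube S : cube (vx S).
Proof. by move=> i; rewrite /vx /=; case: (i \in S); rewrite /= ?lexx ?ler01. Qed.

Lemma supnorm_err Rs m : inM Rs m -> supnorm (fun x => m x - maxf x) = err m.
Proof.
move=> hm; rewrite /supnorm.
set E := [set _ | _ in _]%classic.
have E0 : (E !=set0)%classic by exists `|m (vx set0) - maxf (vx set0)|, (vx set0) => //; exact: vx_cube.
have Eub : ubound E (err m).
  by move=> _ [x hx <-] /=; exact: (@err_bound _ _ hm x hx).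
apply/le_anti/andP; split; first exact: ge_sup.
have hs : has_ubound E by exists (err m).
have hS : forall S, `|m (vx S) - maxf (vx S)| <= sup E.
  move=> S; apply: ub_le_sup => //; exists (vx S) => //; exact: vx_cube.
rewrite /err; elim: (index_enum _) => [|S r IH]; rewrite ?big_nil ?big_cons.
  apply: le_trans (normr_ge0 (m (vx set0) - maxf (vx set0))) _; exact: hS.
by rewrite ge_max IH hS.
Qed.

End S3.


Section S4.
Variables (R : realType) (d : nat).
Local Notation vx := (vx R d).
Local Notation smax := (@smax R d).
Local Notation maxf := (@maxf R d).
Local Notation setT := (finset.setTfor ('I_d : finType)).
Local Notation err := (@err R d).

Definition symf (m : ('I_d -> R) -> R) (x : 'I_d -> R) : R :=
  (#|'S_d|%:R)^-1 * \sum_(s : 'S_d) m (fun i => x (s i)).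

Lemma symf_sym m (t : 'S_d) x : symf m x = symf m (fun i => x (t i)).
Proof.
rewrite /symf; congr (_ * _).
rewrite [LHS](reindex_inj (mulIg t)) /=; apply: eq_bigr => s _.
by congr m; apply/funext => i; rewrite permM.
Qed.

Lemma Sd_gt0 : (0 < #|'S_d|)%N.
Proof. by apply/card_gt0P; exists 1%g. Qed.

Lemma imset_permT (s : 'S_d) : s @: setT = setT.
Proof.
apply/setP => i; rewrite inE; apply/imsetP; exists (s^-1 i)%g; first by rewrite inE.
by rewrite permKV.
Qed.

Lemma maxf_perm (s : 'S_d) x : maxf (fun i => x (s i)) = maxf x.
Proof. by rewrite /maxf smax_perm imset_permT. Qed.

Lemma vx_perm (s : 'S_d) S : (fun i => vx S (s i)) = vx (s @^-1: S).
Proof. by apply/funext => i; rewrite /vx inE. Qed.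

Lemma symf_err m : err (symf m) <= err m.
Proof.
have n0 : (#|'S_d|%:R : R) != 0 by rewrite pnatr_eq0 -lt0n Sd_gt0.
have hS : forall S, `|symf m (vx S) - maxf (vx S)| <= err m.
  move=> S.
  have -> : symf m (vx S) - maxf (vx S) =
    (#|'S_d|%:R)^-1 * \sum_(s : 'S_d) (m (fun i => vx S (s i)) - maxf (fun i => vx S (s i))).
    rewrite sumrB mulrBr; congr (_ - _).
    under eq_bigr => s _ do rewrite maxf_perm.
    by rewrite sumr_const -(mulr_natl (maxf (vx S))) mulrA mulVf // mul1r.
  rewrite normrM ger0_norm ?invr_ge0 ?ler0n //.
  rewrite ler_pdivrMl ?lt0r ?n0 ?ler0n //.
  apply: le_trans (ler_norm_sum _ _ _) _.
  apply: le_trans (_ : \sum_(s : 'S_d) err m <= _).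
    by apply: ler_sum => s _; rewrite vx_perm; exact: err_ge.
  by rewrite sumr_const mulr_natl.
rewrite {1}/err; elim: (index_enum _) => [|S r IH]; rewrite ?big_nil ?big_cons.
  exact: err_ge0.
by rewrite ge_max IH hS.
Qed.

Lemma permimK (s : 'S_d) (B : {set 'I_d}) : s @: (s^-1%g @: B) = B.
Proof.
apply/setP => i; apply/imsetP/idP => [[j /imsetP [k kB ->] ->]|iB].
  by rewrite permKV.
by exists (s^-1 i)%g; [exact: imset_f | rewrite permKV].
Qed.

Lemma symf_inM Rs m : inM Rs m -> inM Rs (symf m).
Proof.
case=> b0 [beta hm].
set b := (if _ then b0 else 0) in hm.
have n0 : (#|'S_d|%:R : R) != 0 by rewrite pnatr_eq0 -lt0n Sd_gt0.
exists b0, (fun B : {set 'I_d} => (#|'S_d|%:R)^-1 * \sum_(s : 'S_d) beta (s^-1%g @: B)).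
move=> x; rewrite /symf.
under eq_bigr => s _ do rewrite hm.
rewrite big_split /= sumr_const mulrDr -(mulr_natl b) mulrA mulVf // mul1r.
congr (_ + _).
have -> : \sum_(s : 'S_d) \sum_(A | admissible Rs A) beta A * smax (fun i => x (s i)) A =
   \sum_(s : 'S_d) \sum_(B | admissible Rs B) beta (s^-1%g @: B) * smax x B.
  apply: eq_bigr => s _.
  rewrite (reindex_inj (imset_inj (@perm_inj _ s^-1%g))) /=.
  apply: eq_big => [B|B _].
    by rewrite /admissible card_imset //; exact: perm_inj.
  by rewrite smax_perm permimK.
rewrite exchange_big /= mulr_sumr; apply: eq_bigr => B _.
by rewrite -mulr_suml mulrA.
Qed.

End S4.


Section S5.
Variables (R : realType) (d : nat).
Local Notation vx := (vx R d).
Local Notation smax := (@smax R d).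
Local Notation setT := (finset.setTfor ('I_d : finType)).

Fixpoint cb (k : nat) : R := if k is k'.+1 then 4 + cb k' *+ #|{: {set 'I_d}}| else 4.

Lemma cb_ge0 k : 0 <= cb k.
Proof.
case: k => [|k] /=; first by [].
apply: addr_ge0 => //; elim: k => [|k IH] /=; first by apply: mulrn_wge0.
by apply: mulrn_wge0; apply: addr_ge0.
Qed.

Lemma cb_ge4 k : 4 <= cb k.
Proof. case: k => [|k] //=; rewrite lerDl; apply: mulrn_wge0; exact: cb_ge0. Qed.

Lemma coerc (c : R) (g : {set 'I_d} -> R) : g set0 = 0 ->
  (forall S, `|c + \sum_A g A * smax (vx S) A| <= 2) ->
  `|c| <= 2 /\ forall T, `|g T| <= cb d.
Proof.
move=> g0 hv.
have hv' : forall S, `|c + \sum_A g A * ((A :&: S) != set0)%:R| <= 2.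
  by move=> S; have := hv S; under eq_bigr => A _ do rewrite smax_vx.
have c2 : `|c| <= 2.
  have := hv' set0; under eq_bigr => A _ do rewrite finset.setI0 eqxx mulr0.
  by rewrite big1 ?addr0.
split=> //.
have W : forall T : {set 'I_d}, \sum_(A : {set 'I_d} | A \subset T) g A =
   (c + \sum_A g A * ((A :&: setT) != set0)%:R) - (c + \sum_A g A * ((A :&: ~: T) != set0)%:R).
  move=> T; rewrite opprD addrACA subrr add0r -sumrB big_mkcond /=.
  apply: eq_bigr => A _.
  have [->|A0] := eqVneq A set0; first by rewrite g0 !mul0r subrr; case: ifP.
  rewrite finset.setIT A0 -finset.setDE finset.setD_eq0 /=.
  by case: (A \subset T); rewrite /= ?mulr0 ?mulr1 ?subr0 ?subrr.
have W4 : forall T : {set 'I_d}, `|\sum_(A : {set 'I_d} | A \subset T) g A| <= 4.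
  move=> T; rewrite W; apply: le_trans (ler_normB _ _) _.
  by have := hv' setT; have := hv' (~: T); lra.
suff H : forall k (T : {set 'I_d}), (#|T| <= k)%N -> `|g T| <= cb k.
  by move=> T; apply: H; rewrite -[X in (_ <= X)%N](card_ord d); exact: max_card.
elim=> [|k IH] T hT.
  by move: hT; rewrite leqn0 cards_eq0 => /eqP ->; rewrite g0 normr0.
have -> : g T = \sum_(A : {set 'I_d} | A \subset T) g A - \sum_(A : {set 'I_d} | (A \subset T) && (A != T)) g A.
  by rewrite (bigD1 T) //= addrK.
apply: le_trans (ler_normB _ _) _; rewrite /= lerD //.
apply: le_trans (ler_norm_sum _ _ _) _.
apply: le_trans (_ : \sum_(A : {set 'I_d}) cb k <= _); last by rewrite sumr_const.
rewrite [X in _ <= X](bigID (fun A : {set 'I_d} => (A \subset T) && (A != T))) /=.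
rewrite -[X in X <= _]addr0 lerD //; last by apply: sumr_ge0 => A _; exact: cb_ge0.
apply: ler_sum => A /andP [AT ATn]; apply: IH.
have : A \proper T by rewrite finset.properEneq ATn AT.
by move/proper_card => h; rewrite -ltnS; apply: leq_trans h hT.
Qed.

End S5.

From mathcomp Require Import all_classical all_reals all_analysis.
Import numFieldNormedType.Exports.

Section S6.
Variables (R : realType) (d : nat).

Lemma cont_bigmax (T : topologicalType) (I : Type) (r : seq I) (f : I -> T -> R) :
  (forall i, continuous (f i)) ->
  continuous (fun p => \big[Num.max/0]_(i <- r) f i p).
Proof.
move=> hf; elim: r => [|a r IH].
  under eq_fun => p do rewrite big_nil; exact: cst_continuous.
under eq_fun => p do rewrite big_cons.
move=> p; apply: (@continuous_max R T (f a) (fun p => \big[Num.max/0]_(i <- r) f i p)).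
  exact: hf. exact: IH.
Qed.

Lemma cont_sum (T : topologicalType) (I : Type) (r : seq I) (P : pred I) (f : I -> T -> R) :
  (forall i, continuous (f i)) ->
  continuous (fun p => \sum_(i <- r | P i) f i p).
Proof.
move=> hf; elim: r => [|a r IH].
  under eq_fun => p do rewrite big_nil; exact: cst_continuous.
under eq_fun => p do rewrite big_cons.
case: (P a) => //= p; apply: continuousD; [exact: hf|exact: IH].
Qed.

Local Notation err := (@err R d).
Local Notation N := #|{: option {set 'I_d}}|.

Definition coef (p : 'rV[R]_N) (o : option {set 'I_d}) : R := p ord0 (enum_rank o).

Definition mp (Rs : {set 'I_d}) (p : 'rV[R]_N) (x : 'I_d -> R) : R :=
  (if [exists r in Rs, val r == 0%N] then coef p None else 0)
  + \sum_(A | admissible Rs A) coef p (Some A) * smax x A.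

Lemma mp_inM Rs p : inM Rs (mp Rs p).
Proof. by exists (coef p None), (fun A => coef p (Some A)). Qed.

Lemma cont_F Rs : continuous (fun p => err (mp Rs p)).
Proof.
rewrite /err; apply: cont_bigmax => S p.
apply: (@continuous_comp _ _ _ (fun p => mp Rs p (vx R d S) - maxf (vx R d S)) Num.norm).
  apply: continuousB; last exact: cst_continuous.
  apply: continuousD.
    case: ([exists r in Rs, val r == 0%N]); last exact: cst_continuous.
    exact: coord_continuous.
  apply: cont_sum => A q; apply: continuousM; last exact: cst_continuous.
  exact: coord_continuous.
exact: norm_continuous.
Qed.

End S6.

Lemma mp0 (R : realType) d Rs x : @mp R d Rs (0 : 'rV[R]_#|{: option {set 'I_d}}|) x = 0.
Proof.
rewrite /mp /coef mxE big1 ?addr0; first by case: ifP.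
by move=> A _; rewrite mxE mul0r.
Qed.

Lemma maxf_vx_le1 (R : realType) d S : `|maxf (vx R d S)| <= 1.
Proof. by rewrite maxf_vx; case: (S != (@finset.set0 _)); rewrite ?normr1 ?normr0 ?ler01. Qed.

Theorem lemma5 (R : realType) (d : nat) (Rs : {set 'I_d}) :
  (2 <= d)%N ->
  exists ms : ('I_d -> R) -> R,
    inMs Rs ms /\
    forall m : ('I_d -> R) -> R, inM Rs m ->
      supnorm (fun x => ms x - maxf x) <= supnorm (fun x => m x - maxf x).
Proof.
move=> _.
set B := cb R d d.
have B4 : 4 <= B := cb_ge4 R d d.
pose K := [set v : 'rV[R]_#|{: option {set 'I_d}}| | forall i, `[-B, B]%classic (v ord0 i)]%classic.
have Kc : compact K := rV_compact (fun i => @segment_compact R (-B) B).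
have K0 : K 0.
  move=> i; rewrite /= mxE in_itv /= oppr_le0; apply/andP; split; lra.
have [ps psK psmin] := EVT_min_rV (ex_intro _ 0 K0) Kc (continuous_subspaceT (cont_F R d Rs)).
have hmin : forall p, K p -> err R d (mp R d Rs ps) <= err R d (mp R d Rs p).
  by move=> p Kp; apply: psmin; rewrite inE.
exists (symf R d (mp R d Rs ps)); split.
  split; [exact: (@symf_inM R d Rs _ (mp_inM R d Rs ps)) | move=> s x; exact: (@symf_sym R d)].
move=> m hm.
rewrite (@supnorm_err R d Rs _ (@symf_inM R d Rs _ (mp_inM R d Rs ps))) (@supnorm_err R d Rs _ hm).
apply: le_trans (@symf_err R d _) _.
have [m1|m1] := leP (err R d m) 1.
  case: hm => b0 [beta hb].
  set c := (if _ then b0 else 0) in hb.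
  pose g A := if admissible Rs A then beta A else 0.
  pose f o := match o with None => c | Some A => g A end.
  pose p := \row_i f (enum_val i) : 'rV[R]_#|{: option {set 'I_d}}|.
  have cp o : coef R d p o = f o by rewrite /coef mxE enum_rankK.
  have mpE : mp R d Rs p = m.
    apply/funext => x; rewrite hb /mp cp /=; congr (_ + _).
      rewrite /c; case: ifP => h //; case: ifP => // h'; by rewrite h in h'.
    by apply: eq_bigr => A hA; rewrite cp /= /g hA.
  have hv : forall S, `|c + \sum_A g A * smax (vx R d S) A| <= 2.
    move=> S.
    have -> : c + \sum_A g A * smax (vx R d S) A = m (vx R d S).
      rewrite hb [in RHS]big_mkcond /=; congr (_ + _); apply: eq_bigr => A _.
      by rewrite /g; case: ifP; rewrite ?mul0r.
    rewrite -[m _](subrK (maxf (vx R d S))).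
    apply: le_trans (ler_normD _ _) _.
    have := maxf_vx_le1 R d S; have := err_ge R d m S; lra.
  have g0 : g (@finset.set0 _) = 0 by rewrite /g /admissible cards0.
  have [c2 gB] := @coerc R d c g g0 hv.
  have Kp : K p.
    move=> i; rewrite /= mxE; case: (enum_val i) => [A|] /=; rewrite in_itv /= -ler_norml.
      exact: gB.
    lra.
  by rewrite -mpE; apply: hmin.
apply: le_trans (hmin 0 K0) _.
apply: le_trans (ltW m1).
rewrite /err; elim: (index_enum _) => [|S r IH]; rewrite ?big_nil ?big_cons //.
by rewrite ge_max IH mp0 sub0r normrN maxf_vx_le1.
Qed.
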